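(* Let $G_0$ be a connected graph with two distinct vertices $x,y$ such that $d_{G_0}(x)\in\{2,3\}$ and $d_{G_0}(y)\in\{2,3\}$. Let $P_1=u_1u_2\cdots u_k$ ($k\ge1$) and $P_2=v_1v_2\cdots v_l$ ($l\ge1$) be paths, vertex-disjoint from each other and from $G_0$. Let $G_1$ be the graph obtained from the disjoint union of $G_0,P_1,P_2$ by adding the edges $u_1x$ and $v_1y$, and let $G_2=G_1-u_1x+u_1v_l$. Then $SO(G_1)>SO(G_2)$ and $SO_{red}(G_1)>SO_{red}(G_2)$.
   Context: $d_G(u)$ denotes the degree of $u$ in $G$. $SO(G)=\sum_{uv\in E(G)}\sqrt{d_G(u)^2+d_G(v)^2}$ and $SO_{red}(G)=\sum_{uv\in E(G)}\sqrt{(d_G(u)-1)^2+(d_G(v)-1)^2}$. *)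

(* Defs.v *)
From HB Require Import structures.
From mathcomp Require Import all_boot all_order all_algebra.
From mathcomp Require Import reals.
Set Implicit Arguments. Unset Strict Implicit. Unset Printing Implicit Defensive.
Import Order.TTheory GRing.Theory Num.Theory.
Local Open Scope ring_scope.

Definition simple_graph (V : finType) (e : rel V) : Prop :=
  symmetric e /\ irreflexive e.

Definition connected_graph (V : finType) (e : rel V) : Prop :=
  forall a b : V, connect e a b.

Definition deg (V : finType) (e : rel V) (u : V) : nat := #|[set w | e u w]|.

(* SO(G) = sum over edges uv of sqrt(d(u)^2 + d(v)^2); each unordered edge
   is counted twice in the sum over ordered adjacent pairs, hence the 1/2. *)
Definition SO (R : realType) (V : finType) (e : rel V) : R :=
  2^-1 * \sum_(u : V) \sum_(v : V | e u v)
           Num.sqrt ((deg e u)%:R ^+ 2 + (deg e v)%:R ^+ 2).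

Definition SOred (R : realType) (V : finType) (e : rel V) : R :=
  2^-1 * \sum_(u : V) \sum_(v : V | e u v)
           Num.sqrt (((deg e u)%:R - 1) ^+ 2 + ((deg e v)%:R - 1) ^+ 2).

(* Vertex set of the disjoint union G0 + P1 + P2:
   inl t = vertex t of G0, inr (inl i) = u_(i+1), inr (inr j) = v_(j+1). *)
Definition VU (T : finType) (k l : nat) : finType := (T + ('I_k + 'I_l))%type.

Definition path_adj (n : nat) (i j : 'I_n) : bool :=
  (i.+1 == j :> nat) || (j.+1 == i :> nat).

Definition G1adj (T : finType) (g : rel T) (x y : T) (k l : nat)
  : rel (VU T k l) := fun a b =>
  match a, b with
  | inl a', inl b' => g a' b'
  | inr (inl i), inr (inl j) => path_adj i j
  | inr (inr i), inr (inr j) => path_adj i j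
  | inl a', inr (inl i) => (a' == x) && (val i == 0)%N
  | inr (inl i), inl a' => (a' == x) && (val i == 0)%N
  | inl a', inr (inr i) => (a' == y) && (val i == 0)%N
  | inr (inr i), inl a' => (a' == y) && (val i == 0)%N
  | _, _ => false
  end.

Definition is_u1 (T : finType) (k l : nat) (a : VU T k l) : bool :=
  if a is inr (inl i) then (val i == 0)%N else false.
Definition is_vl (T : finType) (k l : nat) (a : VU T k l) : bool :=
  if a is inr (inr j) then (val j == l.-1)%N else false.
Definition is_vx (T : finType) (x : T) (k l : nat) (a : VU T k l) : bool :=
  a == inl x.

Definition G2adj (T : finType) (g : rel T) (x y : T) (k l : nat)
  : rel (VU T k l) := fun a b =>
  (G1adj g x y a b && ~~ ((is_u1 a && is_vx x b) || (is_vx x a && is_u1 b)))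
  || (is_u1 a && is_vl b) || (is_vl a && is_u1 b).

Arguments G1adj {T} g x y k l.
Arguments G2adj {T} g x y k l.

(* Main.v *)
Require Import Defs.
From HB Require Import structures.
From mathcomp Require Import all_boot all_order all_algebra.
From mathcomp Require Import reals.
From mathcomp Require Import ring lra zify.
Set Implicit Arguments. Unset Strict Implicit. Unset Printing Implicit Defensive.
Import Order.TTheory GRing.Theory Num.Theory.
Local Open Scope ring_scope.

Lemma two_le_card (V : finType) (A : {set V}) a b :
  a \in A -> b \in A -> a != b -> (2 <= #|A|)%N.
Proof.
move=> aA bA ab; have <- : #|[set a; b]| = 2%N by rewrite cards2 ab.
apply: subset_leq_card; apply/subsetP => z; rewrite !inE => /orP[]/eqP->//.
Qed.

Lemma key (R : realType) (V : finType) (e1 e2 : rel V) (d1 d2 : V -> nat)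
  (F : nat -> nat -> R) (xx u1 vl w : V) :
 xx != u1 -> xx != vl -> u1 != vl -> w != xx -> w != u1 -> w != vl ->
 e1 xx u1 -> e1 u1 xx -> e1 vl w -> e1 w vl -> e2 vl w -> e2 w vl ->
 ~~ e2 xx u1 -> ~~ e2 u1 xx -> ~~ e1 u1 vl -> ~~ e1 vl u1 -> e2 u1 vl -> e2 vl u1 ->
 (forall a b, ~~ [|| (a == xx) && (b == u1), (a == u1) && (b == xx),
      (a==u1)&&(b==vl) | (a==vl)&&(b==u1)] -> e2 a b = e1 a b) ->
 (forall b, e1 vl b -> b = w) -> (forall a, e1 a vl -> a = w) ->
 d1 vl = 1%N -> d2 vl = 2%N -> (1 <= d1 u1 <= 2)%N -> d2 u1 = d1 u1 ->
 (3 <= d1 xx)%N -> (2 <= d1 w)%N -> d2 w = d1 w ->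
 (forall z, z != vl -> (d2 z <= d1 z)%N) ->
 (forall a b, e2 a b -> (1 <= d2 a)%N && (1 <= d2 b)%N) ->
 (forall m m' n n', (1 <= m <= m')%N -> (1 <= n <= n')%N -> F m n <= F m' n') ->
 (forall m n, F m n = F n m) ->
 (forall a du dw, (1 <= du <= 2)%N -> (2 <= dw)%N -> (3 <= a)%N ->
     0 < F a du - F du 2 + F 1 dw - F 2 dw) ->
 \sum_(p : V * V) (if e2 p.1 p.2 then F (d2 p.1) (d2 p.2) else 0) <
 \sum_(p : V * V) (if e1 p.1 p.2 then F (d1 p.1) (d1 p.2) else 0).
Proof.
move=> xu xv uv wx wu wv e1xu e1ux e1vw e1wv e2vw e2wv e2xu e2ux e1uv e1vu e2uv e2vu
  hE hvl hvl' d1v d2v d1u d2u d1x d1w d2w hd hpos Fmono Fsym Fkey.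
rewrite -subr_gt0 -sumrB.
pose s := [:: (xx,u1); (u1,xx); (u1,vl); (vl,u1); (vl,w); (w,vl)].
have us : uniq s.
  rewrite /s /= !inE !xpair_eqE.
  rewrite !(eq_sym w); do ?rewrite (eq_sym u1 xx); do ?rewrite (eq_sym vl xx); do ?rewrite (eq_sym vl u1).
  rewrite ?(negbTE xu) ?(negbTE xv) ?(negbTE uv) ?(negbTE wx) ?(negbTE wu) ?(negbTE wv) ?andbF ?andbT ?eqxx /=.
  by rewrite ?(eq_sym u1 w) ?(eq_sym vl w) ?(negbTE wu) ?(negbTE wv).
rewrite (bigID (fun p => p \in s)) /= -big_uniq //= !big_cons big_nil /=.
rewrite e1xu e1ux e1vw e1wv e2vw e2wv (negbTE e2xu) (negbTE e2ux) (negbTE e1uv)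
  (negbTE e1vu) e2uv e2vu d1v d2v d2u d2w.
set B := (\sum_(i | _) _).
have B0 : 0 <= B.
  apply: sumr_ge0 => -[a b] /=; rewrite /s !inE !xpair_eqE => hn.
  rewrite hE; last first.
    by apply: contra hn => /or4P [] ->; rewrite ?orbT.
  case e: (e1 a b); last by rewrite subrr.
  have av : a != vl.
    apply/eqP => av; subst a; move: (hvl _ e) => bw; subst b.
    by move: hn; rewrite !eqxx ?orbT.
  have bv : b != vl.
    apply/eqP => bv; subst b; move: (hvl' _ e) => aw; subst a.
    by move: hn; rewrite !eqxx ?orbT.
  have e2ab : e2 a b.
    rewrite hE ?e //.
    by apply: contra hn => /or4P [] ->; rewrite ?orbT.
  move/andP: (hpos _ _ e2ab) => [p1 p2].
  rewrite subr_ge0; apply: Fmono; rewrite ?p1 ?p2 ?hd //.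
have := Fkey (d1 xx) (d1 u1) (d1 w) d1u d1w d1x.
rewrite (Fsym (d1 u1) (d1 xx)) (Fsym (d1 w) 1%N) (Fsym (d1 w) 2%N) (Fsym 2%N (d1 u1)).
rewrite addr0 !sub0r !subr0.
lra.
Qed.

Section G.
Variables (T : finType) (g : rel T) (x y : T) (k l : nat).
Hypotheses (gsym : symmetric g) (girr : irreflexive g) (xy : x != y)
  (k0 : (0 < k)%N) (l0 : (0 < l)%N) (dx : (2 <= deg g x)%N) (dy : (2 <= deg g y)%N).
Local Notation V := (VU T k l).
Local Notation e1 := (G1adj g x y k l).
Local Notation e2 := (G2adj g x y k l).
Lemma lpred : (l.-1 < l)%N. Proof. by rewrite ltn_predL. Qed.
Definition u1 : V := inr (inl (Ordinal k0)).
Definition vl : V := inr (inr (Ordinal lpred)).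
Definition xx : V := inl x.

Lemma is_u1E (a : V) : is_u1 a = (a == u1).
Proof. by case: a => [t|[i|j]]. Qed.
Lemma is_vlE (a : V) : is_vl a = (a == vl).
Proof. by case: a => [t|[i|j]]. Qed.

Lemma e2E a b : e2 a b = (e1 a b && ~~ (((a==u1)&&(b==xx)) || ((a==xx)&&(b==u1))))
   || ((a==u1)&&(b==vl)) || ((a==vl)&&(b==u1)).
Proof. by rewrite /G2adj !is_u1E !is_vlE. Qed.

Lemma e1sym : symmetric e1.
Proof.
move=> [a|[i|j]] [b|[i'|j']] //=; rewrite ?gsym // /path_adj orbC //.
Qed.

Lemma e2sym : symmetric e2.
Proof.
move=> a b; rewrite !e2E e1sym.
by case: (a==xx); case: (b==u1); case: (a==u1); case: (b==xx); case: (a==vl);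
  case: (b==vl); rewrite /= ?andbT ?orbF ?andbF ?orbT.
Qed.

Lemma hE a b : ~~ [|| (a == xx) && (b == u1), (a == u1) && (b == xx),
      (a==u1)&&(b==vl) | (a==vl)&&(b==u1)] -> e2 a b = e1 a b.
Proof.
rewrite e2E.
by case: (a==xx); case: (b==u1); case: (a==u1); case: (b==xx); case: (a==vl);
  case: (b==vl); rewrite /= ?andbT ?orbF ?andbF ?orbT.
Qed.

Lemma e1xu : e1 xx u1. Proof. by rewrite /= eqxx. Qed.
Lemma e1ux : e1 u1 xx. Proof. by rewrite /= eqxx. Qed.
Lemma e1uv : ~~ e1 u1 vl. Proof. by []. Qed.
Lemma e1vu : ~~ e1 vl u1. Proof. by []. Qed.
Lemma xu : xx != u1. Proof. by []. Qed.
Lemma xv : xx != vl. Proof. by []. Qed.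
Lemma uv : u1 != vl. Proof. by []. Qed.

Lemma vl_nbr : exists w : V, (forall b, e1 vl b = (b == w)) /\
  [/\ w != xx, w != u1, w != vl & (2 <= deg e1 w)%N].
Proof.
case: (ltngtP l 1) => hl; first by lia.
  have hl2 : (l - 2 < l)%N by lia.
  exists (inr (inr (Ordinal hl2))); split.
    move=> [t|[i|j]] //=.
      have -> : (l.-1 == 0%N) = false by apply/eqP; lia.
      by rewrite andbF.
    rewrite /path_adj /=.
    have hj := ltn_ord j.
    have -> : (l.-1.+1 == j) = false by apply/eqP; lia.
    rewrite /=; apply/eqP/eqP => [h|[->]] /=; last by lia.
    by do 2 f_equal; apply: val_inj => /=; lia.
  split => //.
    by apply/eqP => /(congr1 (fun v => if v is inr (inr j) then val j else 0%N)) /=; lia.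
  rewrite /deg; case: (ltngtP l 2) => h2.
  - by lia.
  - have hl3 : (l - 3 < l)%N by lia.
    apply: (@two_le_card _ _ vl (inr (inr (Ordinal hl3)))); rewrite ?inE /= /path_adj /=.
    + by apply/orP; left; apply/eqP; lia.
    + by apply/orP; right; apply/eqP; lia.
    + apply/eqP => /(congr1 (fun v => if v is inr (inr j) then val j else 0%N)) /=.
      by lia.
  - apply: (@two_le_card _ _ vl (inl y)); rewrite ?inE /= /path_adj /=.
    + by apply/orP; left; apply/eqP; lia.
    + by rewrite eqxx; apply/eqP; lia.
    + by [].
exists (inl y); split.
  move=> [t|[i|j]] //=.
    by rewrite hl /= andbT.
  rewrite /path_adj /=; apply/negbTE.
  by case: j => j /= hj; apply/negP => /orP[]/eqP; lia.
split => //.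
  by rewrite /xx (inj_eq (@inl_inj _ _)) eq_sym.
rewrite /deg.
apply: leq_trans dy _.
rewrite /deg -(card_imset _ (@inl_inj T ('I_k + 'I_l)%type)).
apply: subset_leq_card; apply/subsetP => b /imsetP [t]; rewrite !inE => gt ->.
by [].
Qed.

Lemma deg_same z : z != xx -> z != u1 -> z != vl -> deg e2 z = deg e1 z.
Proof.
move=> zx zu zv; rewrite /deg; apply: eq_card => b.
by rewrite !inE e2E (negbTE zx) (negbTE zu) (negbTE zv) /= ?andbF ?orbF ?andbT.
Qed.

Lemma deg_x : deg e1 xx = (deg e2 xx).+1.
Proof.
rewrite /deg (cardsD1 u1) inE e1xu add1n; congr (_.+1); apply: eq_card => b; rewrite !inE e2E (negbTE xu) (negbTE xv) eqxx /= ?andbF ?orbF ?andbT.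
by rewrite andbC.
Qed.

Lemma deg_vl2 : deg e2 vl = (deg e1 vl).+1.
Proof.
rewrite /deg.
have -> : [set b | e2 vl b] = u1 |: [set b | e1 vl b].
  apply/setP => b; rewrite !inE e2E (eq_sym vl u1) (negbTE uv) (eq_sym vl xx) (negbTE xv) eqxx /=.
  by rewrite ?andbF ?orbF ?andbT orbC.
by rewrite cardsU1 inE (negbTE e1vu).
Qed.

Lemma deg_u1 : deg e2 u1 = deg e1 u1.
Proof.
rewrite /deg.
have -> : [set b | e2 u1 b] = vl |: ([set b | e1 u1 b] :\ xx).
  apply/setP => b; rewrite !inE e2E (negbTE uv) (eq_sym u1 xx) (negbTE xu) eqxx /=.
  by rewrite ?andbF ?orbF ?andbT orbC andbC.
rewrite cardsU1 !inE (negbTE e1uv) andbF add1n (cardsD1 xx [set b | e1 u1 b]) inE e1ux.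
by [].
Qed.

Lemma deg_u1_le : (deg e1 u1 <= 2)%N.
Proof.
rewrite /deg; case: (ltngtP k 1) => hk; first by lia.
  have hk1 : (1 < k)%N by [].
  pose u2 : V := inr (inl (Ordinal hk1)).
  have sub : [set b | e1 u1 b] \subset [set xx; u2].
    apply/subsetP => -[t|[i|j]]; rewrite !inE //=.
    rewrite /path_adj /= => /orP[]/eqP h; last by lia.
    apply/eqP; rewrite /u2; do 2 f_equal; apply: val_inj => /=; lia.
  apply: leq_trans (subset_leq_card sub) _; rewrite cards2; by case: (_ != _).
have sub : [set b | e1 u1 b] \subset [set xx].
  apply/subsetP => -[t|[i|j]]; rewrite !inE //=.
    by move=> /andP[/eqP -> _]; rewrite eqxx.
  rewrite /path_adj /= => /orP[]/eqP h; have := ltn_ord i; lia.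
by apply: leq_trans (subset_leq_card sub) _; rewrite cards1.
Qed.

Lemma deg_x2 : (2 <= deg e2 xx)%N.
Proof.
apply: leq_trans dx _.
rewrite /deg -(card_imset _ (@inl_inj T ('I_k + 'I_l)%type)).
apply: subset_leq_card; apply/subsetP => b /imsetP [t]; rewrite !inE => gt ->.
by rewrite e2E /= gt eqxx /u1.
Qed.

Lemma graph_main (R : realType) (F : nat -> nat -> R) :
 (forall m m' n n', (1 <= m <= m')%N -> (1 <= n <= n')%N -> F m n <= F m' n') ->
 (forall m n, F m n = F n m) ->
 (forall a du dw, (1 <= du <= 2)%N -> (2 <= dw)%N -> (3 <= a)%N ->
     0 < F a du - F du 2 + F 1 dw - F 2 dw) ->
 \sum_(p : V * V) (if e2 p.1 p.2 then F (deg e2 p.1) (deg e2 p.2) else 0) <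
 \sum_(p : V * V) (if e1 p.1 p.2 then F (deg e1 p.1) (deg e1 p.2) else 0).
Proof.
move=> Fm Fs Fk.
have [w [hw [wx wu wv dw]]] := vl_nbr.
have ux : u1 != xx by rewrite eq_sym xu.
have vx : vl != xx by rewrite eq_sym xv.
have vu : vl != u1 by rewrite eq_sym uv.
have xw : xx != w by rewrite eq_sym wx.
have uw : u1 != w by rewrite eq_sym wu.
have vw : vl != w by rewrite eq_sym wv.
have e1vw : e1 vl w by rewrite hw eqxx.
have e1wv : e1 w vl by rewrite e1sym.
have d1v : deg e1 vl = 1%N.
  rewrite /deg; have -> : [set b | e1 vl b] = [set w] by apply/setP => b; rewrite !inE hw.
  by rewrite cards1.
have X := (negbTE xu, negbTE xv, negbTE uv, negbTE wx, negbTE wu, negbTE wv,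
   negbTE ux, negbTE vx, negbTE vu, negbTE xw, negbTE uw, negbTE vw).
have e2vw : e2 vl w by rewrite e2E e1vw !X /=.
have e2wv : e2 w vl by rewrite e2E e1wv !X /=.
have e2xu : ~~ e2 xx u1 by rewrite e2E e1xu !X !eqxx /=.
have e2ux : ~~ e2 u1 xx by rewrite e2E e1ux !X !eqxx /=.
have e2uv : e2 u1 vl by rewrite e2E !eqxx /= ?orbT.
have e2vu : e2 vl u1 by rewrite e2E !eqxx /= ?orbT.
have hvl : forall b, e1 vl b -> b = w by move=> b; rewrite hw => /eqP.
have hvl' : forall a, e1 a vl -> a = w by move=> a; rewrite e1sym hw => /eqP.
have d2v : deg e2 vl = 2%N by rewrite deg_vl2 d1v.
have d1u : (1 <= deg e1 u1 <= 2)%N.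
  rewrite deg_u1_le andbT; apply/card_gt0P; exists xx; by rewrite inE e1ux.
have d1x : (3 <= deg e1 xx)%N by rewrite deg_x ltnS deg_x2.
have d2w : deg e2 w = deg e1 w by rewrite deg_same.
have hd : forall z, z != vl -> (deg e2 z <= deg e1 z)%N.
  move=> z zv; case: (eqVneq z xx) => [->|zx]; first by rewrite deg_x.
  case: (eqVneq z u1) => [->|zu]; first by rewrite deg_u1.
  by rewrite deg_same.
have hpos : forall a b, e2 a b -> (1 <= deg e2 a)%N && (1 <= deg e2 b)%N.
  move=> a b eab; apply/andP; split; apply/card_gt0P.
    by exists b; rewrite inE.
  by exists a; rewrite inE e2sym.
exact: (key xu xv uv wx wu wv e1xu e1ux e1vw e1wv e2vw e2wv e2xu e2ux e1uv e1vu
  e2uv e2vu hE hvl hvl' d1v d2v d1u (esym (esym deg_u1)) d1x dw d2w hd hpos Fm Fs Fk).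
Qed.

End G.

Lemma sq_ge (R : rcfType) (c b : R) : 0 <= b -> b ^+ 2 <= c -> b <= Num.sqrt c.
Proof.
move=> b0 h; rewrite -(ger0_norm b0) -sqrtr_sqr ler_sqrt //.
exact: le_trans (sqr_ge0 b) h.
Qed.

Lemma sq_le (R : rcfType) (c b : R) : 0 <= b -> c <= b ^+ 2 -> Num.sqrt c <= b.
Proof.
move=> b0 h; rewrite -(ger0_norm b0) -sqrtr_sqr.
case: (lerP 0 c) => c0; first by rewrite ler_sqrt // sqr_ge0.
by rewrite ltr0_sqrtr // sqrtr_ge0.
Qed.

Section F.
Variable R : realType.
Definition F1 (m n : nat) : R := Num.sqrt (m%:R ^+ 2 + n%:R ^+ 2).
Definition F2 (m n : nat) : R := Num.sqrt ((m%:R - 1) ^+ 2 + (n%:R - 1) ^+ 2).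

Lemma F1mono m m' n n' : (1 <= m <= m')%N -> (1 <= n <= n')%N -> F1 m n <= F1 m' n'.
Proof.
move=> /andP[m1 mm] /andP[n1 nn]; rewrite /F1 ler_sqrt ?addr_ge0 ?sqr_ge0 //.
have h1 : (m%:R : R) <= m'%:R by rewrite ler_nat.
have h2 : (n%:R : R) <= n'%:R by rewrite ler_nat.
have h3 : (0 : R) <= m%:R by [].
have h4 : (0 : R) <= n%:R by [].
nra.
Qed.

Lemma F2mono m m' n n' : (1 <= m <= m')%N -> (1 <= n <= n')%N -> F2 m n <= F2 m' n'.
Proof.
move=> /andP[m1 mm] /andP[n1 nn]; rewrite /F2 ler_sqrt ?addr_ge0 ?sqr_ge0 //.
have h1 : (m%:R : R) <= m'%:R by rewrite ler_nat.
have h2 : (n%:R : R) <= n'%:R by rewrite ler_nat.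
have h3 : (1 : R) <= m%:R by rewrite ler1n.
have h4 : (1 : R) <= n%:R by rewrite ler1n.
nra.
Qed.

Lemma F1sym m n : F1 m n = F1 n m. Proof. by rewrite /F1 addrC. Qed.
Lemma F2sym m n : F2 m n = F2 n m. Proof. by rewrite /F2 addrC. Qed.

Lemma F1key a du dw : (1 <= du <= 2)%N -> (2 <= dw)%N -> (3 <= a)%N ->
     0 < F1 a du - F1 du 2 + F1 1 dw - F1 2 dw.
Proof.
move=> /andP[du1 du2] dw2 a3.
have hA : F1 3 du <= F1 a du by apply: F1mono; apply/andP; split; lia.
have hB : F1 2 dw - F1 1 dw <= 3/5.
  have D2 : (2 : R) <= dw%:R by rewrite ler_nat.
  rewrite /F1.
  set D := (dw%:R : R) in D2 *.
  set s := Num.sqrt _; set t := Num.sqrt (_ + _).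
  have s0 : 0 <= s by apply: sqrtr_ge0.
  have t0 : 0 <= t by apply: sqrtr_ge0.
  have s2 : s ^+ 2 = 4 + D ^+ 2 by rewrite sqr_sqrtr ?addr_ge0 ?sqr_ge0 //; congr (_ + _); rewrite expr2 -natrM.
  have t2 : t ^+ 2 = 1 + D ^+ 2 by rewrite sqr_sqrtr ?addr_ge0 ?sqr_ge0 // expr1n.
  have tb : 11/5 <= t by apply: sq_ge; nra.
  have sb : 14/5 <= s by apply: sq_ge; nra.
  nra.
move: hA; have [->|->] : du = 1%N \/ du = 2%N by lia; move=> hA.
- have h1 : 31/10 <= F1 3 1 by apply: sq_ge; rewrite ?expr1n; lra.
  have h2 : F1 1 2 <= 9/4 by apply: sq_le; rewrite ?expr1n; lra.
  lra.
- move=> hA.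
  have h1 : 18/5 <= F1 3 2. apply: sq_ge. lra. rewrite !expr2. lra.
  have h2 : F1 2 2 <= 283/100 by apply: sq_le; [lra|rewrite !expr2; lra].
  lra.
Qed.

Lemma F2key a du dw : (1 <= du <= 2)%N -> (2 <= dw)%N -> (3 <= a)%N ->
     0 < F2 a du - F2 du 2 + F2 1 dw - F2 2 dw.
Proof.
move=> /andP[du1 du2] dw2 a3.
have hA : F2 3 du <= F2 a du by apply: F2mono; apply/andP; split; lia.
have hB : F2 2 dw - F2 1 dw <= 1/2.
  have D2 : (2 : R) <= dw%:R by rewrite ler_nat.
  rewrite /F2.
  set D := (dw%:R : R) in D2 *.
  set s := Num.sqrt _; set t := Num.sqrt (_ + _).
  have s0 : 0 <= s by apply: sqrtr_ge0.
  have t0 : 0 <= t by apply: sqrtr_ge0.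
  have s2 : s ^+ 2 = (2%:R - 1) ^+ 2 + (D - 1) ^+ 2 by rewrite sqr_sqrtr ?addr_ge0 ?sqr_ge0.
  have t2 : t ^+ 2 = (1%:R - 1) ^+ 2 + (D - 1) ^+ 2 by rewrite sqr_sqrtr ?addr_ge0 ?sqr_ge0.
  rewrite !expr2 in s2 t2.
  have tb : 1 <= t by apply: sq_ge; [lra | rewrite !expr2; nra].
  have sb : 1 <= s by apply: sq_ge; [lra | rewrite !expr2; nra].
  have st : (s - t) * (s + t) = 1.
    have -> : (s - t) * (s + t) = s ^+ 2 - t ^+ 2 by rewrite !expr2; ring.
    rewrite !expr2 s2 t2; lra.
  nra.
move: hA; have [->|->] : du = 1%N \/ du = 2%N by lia.
- move=> hA.
  have h1 : 2 <= F2 3 1 by apply: sq_ge; [lra | rewrite !expr2; lra].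
  have h2 : F2 1 2 <= 1 by apply: sq_le; [lra | rewrite !expr2; lra].
  lra.
- move=> hA.
  have h1 : 11/5 <= F2 3 2 by apply: sq_ge; [lra | rewrite !expr2; lra].
  have h2 : F2 2 2 <= 3/2 by apply: sq_le; [lra | rewrite !expr2; lra].
  lra.
Qed.
End F.

Theorem lemma2p4 (R : realType) (T : finType) (g : rel T) (x y : T)
  (k l : nat) :
  simple_graph g -> connected_graph g -> x != y ->
  ((deg g x == 2) || (deg g x == 3))%N ->
  ((deg g y == 2) || (deg g y == 3))%N ->
  (0 < k)%N -> (0 < l)%N ->
  SO R (G2adj g x y k l) < SO R (G1adj g x y k l) /\
  SOred R (G2adj g x y k l) < SOred R (G1adj g x y k l).
Proof.
move=> [gs gi] _ xy hx hy k0 l0.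
have dx : (2 <= deg g x)%N by case/orP: hx => /eqP ->.
have dy : (2 <= deg g y)%N by case/orP: hy => /eqP ->.
have sumE : forall (F : nat -> nat -> R) (e : rel (VU T k l)),
    \sum_u \sum_(v | e u v) F (deg e u) (deg e v) =
    \sum_(p : VU T k l * VU T k l) if e p.1 p.2 then F (deg e p.1) (deg e p.2) else 0.
  move=> F e; rewrite -(pair_bigA _ (fun u v => if e u v then F (deg e u) (deg e v) else 0)) /=.
  by apply: eq_bigr => u _; rewrite big_mkcond.
split; rewrite /SO /SOred ltr_pM2l ?invr_gt0 ?ltr0n //.
- have H := graph_main gs xy k0 l0 dx dy (@F1mono R) (@F1sym R) (@F1key R).
  rewrite -!(sumE (@F1 R)) in H; exact: H.
- have H := graph_main gs xy k0 l0 dx dy (@F2mono R) (@F2sym R) (@F2key R).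
  rewrite -!(sumE (@F2 R)) in H; exact: H.
Qed.
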